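(* Fix a positive integer $r$. There are only finitely many tuples of positive integers $(d,e_1,\dots,e_r)$ satisfying all of the following: - $d > e_1 \ge e_2\ge\cdots\ge e_r$; - $e_k \mid d$ for every $k$; - $\sum_{k=1}^r (e_k+1) = d+1$. Equivalently, for each $r$ there are only finitely many ''neat'' canonical forms $p = \sum_{k=1}^r f_k^{d/e_k}$ (with $f_k\in H_{e_k}(\mathbb{C}^2)$) of the type in the following statement: for $m=0$, a general binary $d$-ic form is a sum $\sum_{k=1}^r f_k^{d/e_k}$ with $\deg f_k=e_k$ whenever the three conditions above hold.
   Context: $H_d(\mathbb{C}^n)$ denotes the complex vector space of homogeneous polynomials of degree $d$ in $n$ variables. *)

(* Defs.v *)
From mathcomp Require Import all_boot.
Set Implicit Arguments. Unset Strict Implicit. Unset Printing Implicit Defensive.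

(* A tuple (d, e_1, ..., e_r) is represented by d : nat and the sequence
   e = [:: e_1; ...; e_r] (so e_k = nth 0 e (k-1)). *)
Definition admissible (r d : nat) (e : seq nat) : Prop :=
  [/\ size e = r,
      0 < d /\ all (fun x => 0 < x) e,
      head 0 e < d /\ sorted geq e,
      all (fun x => x %| d) e &
      \sum_(x <- e) (x + 1) = d + 1].

(* Main.v *)
Require Import Defs.
From mathcomp Require Import all_boot.
From mathcomp Require Import zify.

Definition Pgap (r a b M : nat) : Prop :=
  forall d (e : seq nat), size e = r ->
    all (fun x => (0 < x) && (x %| d)) e ->
    b * sumn e < a * d -> b * d <= M * (a * d - b * sumn e).

Lemma Pgap_mono r a b M M' : M <= M' -> Pgap r a b M -> Pgap r a b M'.
Proof.
move=> hM hP d e hs ha hlt; apply: leq_trans (hP d e hs ha hlt) _.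
by rewrite leq_mul2r hM orbT.
Qed.

Lemma pigeon (e : seq nat) k c :
  (forall x, x \in e -> x * k <= c) -> sumn e * k <= size e * c.
Proof.
elim: e => [|x e IH] hx //=.
rewrite mulnDl mulSn; apply: leq_add.
  by apply: hx; rewrite inE eqxx.
by apply: IH => y hy; apply: hx; rewrite inE hy orbT.
Qed.

Lemma gap_bound r : forall a b, 0 < b -> exists M, Pgap r a b M.
Proof.
elim: r => [|r IH] a b hb.
  exists b => d e /size0nil -> _ /= hlt.
  rewrite muln0 subn0 mulnA; move: hlt; rewrite muln0 => hlt.
  rewrite leq_mul2r. apply/orP; right. rewrite -{1}(muln1 b) leq_mul2l.
  apply/orP; right. by case: a hlt.
have hfin : forall N, exists M, forall n, n < N -> 0 < n -> b < a * n ->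
    Pgap r (a * n - b) (b * n) M.
  elim=> [|N [M hM]]; first by exists 0 => n.
  case: (posnP N) => [-> | hN]; first by exists M => n; rewrite ltnS leqn0 => /eqP ->.
  have [M' hM'] := IH (a * N - b) (b * N) (ltn_mul hb hN).
  exists (maxn M M') => n; rewrite ltnS leq_eqVlt => /orP [/eqP -> | hn] hn0 hbn'.
    by apply: Pgap_mono hM'; rewrite leq_maxr.
  by apply: Pgap_mono (hM n hn hn0 hbn'); rewrite leq_maxl.
have [M hM] := hfin (2 * b * r.+1).
exists (maxn (2 * b) M) => d e hs ha hlt.
have hd : 0 < d by nia.
have ha0 : 0 < a by nia.
case: (leqP (2 * b * r.+1 * sumn e) (r.+1 * (a * d))) => hcase.
  have h2 : 2 * (b * sumn e) <= a * d.
    by move: hcase; rewrite -mulnA mulnC (mulnC 2) -!mulnA leq_pmul2l //; lia.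
  apply: leq_trans (_ : 2 * b * (a * d - b * sumn e) <= _); last first.
    by rewrite leq_mul2r leq_maxl orbT.
  nia.
have [x xe hx] : exists2 x, x \in e & a * d < x * (2 * b * r.+1).
  apply/hasP; apply/negPn/negP => /hasPn hall.
  move: hcase; apply/negP; rewrite -leqNgt (mulnC _ (sumn e)) -{2}hs.
  apply: pigeon => y hy.
  by move: (hall _ hy); rewrite -leqNgt.
move/allP: (ha) => /(_ x xe) /andP [hx0 /dvdnP [n hn]].
have hn0 : 0 < n by nia.
have hnlt : n < 2 * b * r.+1.
  move: hx; rewrite hn; nia.
have hsum : sumn e = x + sumn (rem x e) by rewrite (perm_sumn (perm_to_rem xe)).
have hbx : b < a * n.
  move: hlt; rewrite hsum hn => hlt; nia.
have hP := hM n hnlt hn0 hbx d (rem x e).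
have hs' : size (rem x e) = r by rewrite size_rem // hs.
have ha' : all (fun x => (0 < x) && (x %| d)) (rem x e).
  apply/allP => y /mem_rem hy; exact: (allP ha y hy).
have hlt' : b * n * sumn (rem x e) < (a * n - b) * d.
  move: hlt; rewrite hsum hn => hlt; nia.
have := hP hs' ha' hlt'.
rewrite hsum hn => H.
apply: leq_trans (_ : M * (a * (n * x) - b * (x + sumn (rem x e))) <= _); last first.
  by rewrite leq_mul2r leq_maxr orbT.
move: hlt; rewrite hsum hn => hlt.
have E : (a * n - b) * (n * x) - b * n * sumn (rem x e)
   = n * (a * (n * x) - b * (x + sumn (rem x e))).
  nia.
rewrite E in H.
rewrite -(leq_pmul2l hn0).
have e1 : n * (b * (n * x)) = b * n * (n * x) by nia.
have e2 : n * (M * (a * (n * x) - b * (x + sumn (rem x e))))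
   = M * (n * (a * (n * x) - b * (x + sumn (rem x e)))) by nia.
by rewrite e1 e2.
Qed.

Fixpoint lists (n r : nat) : seq (seq nat) :=
  if r is r'.+1 then [seq x :: l | x <- iota 0 n, l <- lists n r'] else [:: [::]].

Lemma mem_lists n (e : seq nat) : all (fun x => x < n) e -> e \in lists n (size e).
Proof.
elim: e => [|x e IH] //= /andP [hx he].
by apply: allpairs_f; [rewrite mem_iota | exact: IH].
Qed.

Lemma big_sum1 (e : seq nat) : \sum_(x <- e) (x + 1) = sumn e + size e.
Proof.
elim: e => [|x e IH]; first by rewrite big_nil.
by rewrite big_cons IH /=; lia.
Qed.

Theorem theorem4p4 (r : nat) (hr : 0 < r) :
  exists s : seq (nat * seq nat),
    forall (d : nat) (e : seq nat), admissible r d e -> (d, e) \in s.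
Proof.
have [M hM] := gap_bound r 1 1 (ltnSn 0).
exists [seq (d, l) | d <- iota 0 (M * r).+1, l <- lists (M * r).+1 r].
move=> d e [hs [hd hpos] [hhead _] hdiv]; rewrite big_sum1 => hsum.
have hr2 : 1 < r.
  case: r hr hs hsum {hM} => [|[|r]] // _ hs hsum.
  move: hs hsum hhead; case: e {hpos hdiv} => [|x [|y e]] //= _ hsum hhead; lia.
have hall : all (fun x => (0 < x) && (x %| d)) e.
  apply/allP => x xe; rewrite (allP hpos x xe) (allP hdiv x xe) //.
have := hM d e hs hall; rewrite !mul1n => H.
have hdb : d <= M * r.
  have hlt : sumn e < d by lia.
  apply: leq_trans (H hlt) _; rewrite leq_mul2l; apply/orP; right; lia.
apply: allpairs_f; first by rewrite mem_iota.
rewrite -hs; apply: mem_lists; apply/allP => x xe.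
rewrite /= hs ltnS; exact: leq_trans (dvdn_leq hd (allP hdiv x xe)) hdb.
Qed.
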